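(* Let $K$ be a field of characteristic $0$, let $W\le S_d$ and $V\le S_r$ be permutation groups and let $\chi$, $\theta$ be one-dimensional characters of $W$, $V$ respectively. Regard $W\times V\le S_d\times S_r\le S_{d+r}$, where $(\sigma,\tau)$ is the permutation $s\mapsto\sigma(s)$ for $1\le s\le d$ and $d+t\mapsto d+\tau(t)$ for $1\le t\le r$, and let $\lambda=\chi\otimes\theta$ be the one-dimensional character $(\sigma,\tau)\mapsto\chi(\sigma)\theta(\tau)$ of $W\times V$. Then: (i) for every $K$-linear space $E$, the rule $(y_1\chi\cdots\chi y_d)\otimes(z_1\theta\cdots\theta z_r)\mapsto y_1\lambda\cdots\lambda y_d\lambda z_1\lambda\cdots\lambda z_r$ ($y_s,z_t\in E$) gives a well-defined linear isomorphism $\Pi_E\colon[\chi]^d(E)\otimes[\theta]^r(E)\to[\lambda]^{d+r}(E)$; (ii) the family $\Pi=(\Pi_E)$, $E$ running over finite-dimensional $K$-linear spaces, is a natural isomorphism of functors $[\chi]^d(-)\otimes[\theta]^r(-)\to[\lambda]^{d+r}(-)$; (iii) $g(\chi\otimes\theta;x_0,x_1,x_2,\dots)=Z(\chi;p_1,\dots,p_d)\,Z(\theta;p_1,\dots,p_r)$, where $p_s$ are the power sums in $x_0,x_1,x_2,\dots$.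
   Context: A one-dimensional character of a group $G$ is a homomorphism $G\to K^\times$. For $U\le S_m$ with one-dimensional character $\psi$ and a $K$-linear space $E$: $U$ acts on $\otimes^mE$ by $\sigma(x_1\otimes\cdots\otimes x_m)=x_{\sigma^{-1}(1)}\otimes\cdots\otimes x_{\sigma^{-1}(m)}$; ${}_\psi(\otimes^mE)$ is the subspace spanned by all $\psi^{-1}(\sigma)z-\sigma z$; the semi-symmetric power is $[\psi]^m(E)=\otimes^mE/{}_\psi(\otimes^mE)$, with $x_1\psi\cdots\psi x_m$ the image of $x_1\otimes\cdots\otimes x_m$; for a linear map $l$, $[\psi]^m(l)$ sends $x_1\psi\cdots\psi x_m\mapsto l(x_1)\psi\cdots\psi l(x_m)$, making $[\psi]^m(-)$ a functor. $U$ acts on $\mathbb N_0^m$ ($\mathbb N_0=\{0,1,2,\dots\}$) by $\sigma(i_1,\dots,i_m)=(i_{\sigma^{-1}(1)},\dots,i_{\sigma^{-1}(m)})$; $J(\mathbb N_0^m,\psi)$ is the set of $j\in\mathbb N_0^m$ lexicographically minimal in their $U$-orbit with $\psi(\sigma)=1$ for all $\sigma$ in the stabilizer $U_j$; $g(\psi;x_0,x_1,\dots)=\sum_{j\in J(\mathbb N_0^m,\psi)}x_{j_1}\cdots x_{j_m}$. $Z(\psi;p_1,\dots,p_m)=|U|^{-1}\sum_{\sigma\in U}\psi(\sigma)p_1^{c_1(\sigma)}\cdots p_m^{c_m(\sigma)}$, $c_s(\sigma)$ being the number of $s$-cycles of $\sigma$; $p_s=\sum_i x_i^s$. *)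

(* Defs.v *)
From HB Require Import structures.
From mathcomp Require Import all_boot all_order all_algebra all_fingroup.
From mathcomp Require Import generic_quotient ring_quotient.
From mathcomp Require Import monalg.
From mathcomp Require Import mpoly.
From Stdlib Require Import ClassicalEpsilon.
Set Implicit Arguments. Unset Strict Implicit. Unset Printing Implicit Defensive.
Import GRing.Theory.
Local Open Scope ring_scope.
Local Open Scope quotient_scope.
Import Quotient.

Section Span.
Variables (R : nzRingType) (V : lmodType R) (S : V -> Prop).

Definition in_span (v : V) : Prop :=
  exists s : seq (R * V), (forall p, p \in s -> S p.2) /\
    v = \sum_(p <- s) p.1 *: p.2.

Definition span_pred : {pred V} :=
  fun v => if excluded_middle_informative (in_span v) then true else false.

Lemma span_predP v : reflect (in_span v) (v \in span_pred).
Proof.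
rewrite unfold_in /span_pred; case: excluded_middle_informative => h.
  by constructor. by constructor.
Qed.

Lemma span_scale_seq (c : R) (s : seq (R * V)) :
  \sum_(p <- [seq ((c * q.1 : R), q.2) | q <- s]) p.1 *: (p.2 : V) =
  c *: \sum_(p <- s) p.1 *: (p.2 : V).
Proof. by rewrite big_map scaler_sumr; apply: eq_bigr => p _; rewrite scalerA. Qed.

Lemma span_zmod : zmod_closed span_pred.
Proof.
split; first by apply/span_predP; exists [::]; rewrite big_nil.
move=> u v /span_predP [s [Hs ->]] /span_predP [t [Ht ->]].
apply/span_predP; exists (s ++ [seq ((-1 * q.1 : R), q.2) | q <- t]); split.
  move=> p; rewrite mem_cat => /orP [/Hs //|/mapP [q /Ht Hq ->]] //.
by rewrite big_cat span_scale_seq scaleN1r.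
Qed.

HB.instance Definition _ := GRing.isZmodClosed.Build V span_pred span_zmod.

Lemma span_scale c v : v \in span_pred -> c *: v \in span_pred.
Proof.
move=> /span_predP [s [Hs ->]]; apply/span_predP.
exists [seq ((c * q.1 : R), q.2) | q <- s]; split; last by rewrite span_scale_seq.
by move=> p /mapP [q /Hs Hq ->].
Qed.

Lemma span_gen v : S v -> v \in span_pred.
Proof.
move=> Sv; apply/span_predP; exists [:: (1, v)]; split.
  by move=> p; rewrite inE => /eqP ->.
by rewrite big_seq1 scale1r.
Qed.

Local Notation Quot := (Quotient.quot span_pred).

Definition qscale (c : R) (x : Quot) : Quot := \pi_Quot (c *: repr x).

Lemma pi_scale c : {morph \pi_Quot : x / c *: x >-> qscale c x}.
Proof.
move=> x; rewrite /qscale; apply/eqP; rewrite -Quotient.idealrBE.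
by rewrite -scalerBr span_scale // Quotient.idealrBE reprK.
Qed.

Canonical pi_scale_morph c := PiMorph1 (pi_scale c).

Lemma qscaleA a b x : qscale a (qscale b x) = qscale (a * b) x.
Proof. by rewrite -[x]reprK !piE scalerA. Qed.
Lemma qscale1 : left_id 1 qscale.
Proof. by move=> x; rewrite -[x]reprK !piE scale1r. Qed.
Lemma qscaleDr : right_distributive qscale +%R.
Proof. by move=> a x y; rewrite -[x]reprK -[y]reprK !piE scalerDr. Qed.
Lemma qscaleDl x : {morph qscale^~ x : a b / a + b}.
Proof. by move=> a b; rewrite -[x]reprK !piE scalerDl. Qed.

HB.instance Definition _ := GRing.Zmodule_isLmodule.Build R Quot
  qscaleA qscale1 qscaleDr qscaleDl.
End Span.

Notation Quot S := (Quotient.quot (span_pred S)).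

Section Constructions.
Variable K : fieldType.

(* The free K-module on a (choice) type X: finitely supported X -> K.   *)
Notation Free X := (@monalg.malg X K).
Notation "[ 'b' x ]" := (monalg.mkmalgU x 1) (format "[ 'b'  x ]").

Definition free_lift (X Y : choiceType) (f : X -> Y) (g : Free X) : Free Y :=
  \sum_(k <- finmap.enum_fset (monalg.msupp g)) monalg.mkmalgU (f k) (monalg.mcoeff k g).

Definition upd (E : Type) m (x : {ffun 'I_m -> E}) (i : 'I_m) (e : E) :
  {ffun 'I_m -> E} := [ffun k => if k == i then e else x k].

Definition multilin_rel (E : lmodType K) (m : nat) :
    Free {ffun 'I_m -> E} -> Prop :=
  fun v => exists (x : {ffun 'I_m -> E}) (i : 'I_m) (a : K) (y z : E),
    v = [b upd x i (a *: y + z) ] - a *: [b upd x i y ] - [b upd x i z ].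

Definition tpow (E : lmodType K) (m : nat) := Quot (@multilin_rel E m).

Definition tens (E : lmodType K) m (x : {ffun 'I_m -> E}) : tpow E m :=
  \pi_(tpow E m) [b x ].

Definition perm_tuple (T : Type) m (s : 'S_m) (x : {ffun 'I_m -> T}) :
  {ffun 'I_m -> T} := [ffun k => x ((s^-1)%g k)].

Definition tact (E : lmodType K) m (s : 'S_m) (z : tpow E m) : tpow E m :=
  \pi_(tpow E m) (free_lift (@perm_tuple E m s) (repr z)).

Definition ssp_rel (E : lmodType K) m (U : {set 'S_m}) (psi : 'S_m -> K) :
    tpow E m -> Prop :=
  fun w => exists s, s \in U /\ exists z : tpow E m,
    w = (psi s)^-1 *: z - tact s z.

Definition ssp (E : lmodType K) m (U : {set 'S_m}) (psi : 'S_m -> K) :=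
  Quot (@ssp_rel E m U psi).

Definition sspe (E : lmodType K) m (U : {set 'S_m}) (psi : 'S_m -> K)
  (x : {ffun 'I_m -> E}) : ssp E U psi := \pi_(ssp E U psi) (tens x).

Definition bilin_rel (A B : lmodType K) : Free (A * B)%type -> Prop :=
  fun v =>
    (exists (a a' : A) (b : B) (c : K),
       v = [b (c *: a + a', b) ] - c *: [b (a, b) ] - [b (a', b) ]) \/
    (exists (a : A) (b b' : B) (c : K),
       v = [b (a, c *: b + b') ] - c *: [b (a, b) ] - [b (a, b') ]).

Definition tprod (A B : lmodType K) := Quot (@bilin_rel A B).

Definition tpe (A B : lmodType K) (a : A) (b : B) : tprod A B :=
  \pi_(tprod A B) [b (a, b) ].

Definition tpow_map (E F : lmodType K) m (l : E -> F) (z : tpow E m) : tpow F m :=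
  \pi_(tpow F m) (free_lift (fun x : {ffun 'I_m -> E} => [ffun i => l (x i)])
                            (repr z)).

Definition ssp_map (E F : lmodType K) m (U : {set 'S_m}) (psi : 'S_m -> K)
  (l : E -> F) (z : ssp E U psi) : ssp F U psi :=
  \pi_(ssp F U psi) (tpow_map l (repr z)).

Definition tprod_map (A A' B B' : lmodType K) (f : A -> A') (g : B -> B')
  (z : tprod A B) : tprod A' B' :=
  \pi_(tprod A' B') (free_lift (fun p : A * B => (f p.1, g p.2)) (repr z)).

Definition lin_char m (U : {set 'S_m}) (psi : 'S_m -> K) : Prop :=
  {in U &, forall s t, psi (s * t)%g = psi s * psi t} /\
  {in U, forall s, psi s != 0}.

End Constructions.

Section PairPerm.
Variables (d r : nat) (s : 'S_d) (t : 'S_r).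

Definition pair_fun (s : 'S_d) (t : 'S_r) (i : 'I_(d + r)) : 'I_(d + r) :=
  match split i with
  | inl a => lshift r (s a)
  | inr b => rshift d (t b)
  end.

Lemma pair_funK : cancel (pair_fun s t) (pair_fun s^-1 t^-1).
Proof.
move=> i; rewrite /pair_fun -{2}(splitK i); case: (split i) => [a|b] /=.
  by rewrite -[lshift r (s a)]/(unsplit (inl (s a) : 'I_d + 'I_r)) unsplitK permK.
by rewrite -[rshift d (t b)]/(unsplit (inr (t b) : 'I_d + 'I_r)) unsplitK permK.
Qed.

Definition pair_perm : 'S_(d + r) := perm (can_inj pair_funK).
End PairPerm.

Definition prod_perm_set d r (W : {set 'S_d}) (V : {set 'S_r}) :
  {set 'S_(d + r)} := [set pair_perm s t | s in W, t in V].

Definition concat_tuple (E : Type) d r (y : {ffun 'I_d -> E}) (z : {ffun 'I_r -> E}) :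
  {ffun 'I_(d + r) -> E} :=
  [ffun i => match split i with inl a => y a | inr b => z b end].

(* Generating functions, truncated to the variables x_0, ..., x_(N-1)
   (a formal power series in x_0, x_1, ... is determined by all its
   truncations).                                                       *)
Section GenFun.
Variables (K : fieldType).

Definition lexle m (j j' : 'I_m -> nat) : bool :=
  [forall k : 'I_m,
    ([forall i : 'I_m, (i < k)%N ==> (j i == j' i)] && (j k != j' k))
      ==> (j k < j' k)%N].

Definition idx_act m N (s : 'S_m) (j : {ffun 'I_m -> 'I_N}) : {ffun 'I_m -> 'I_N} :=
  [ffun k => j ((s^-1)%g k)].

Definition Jset m N (U : {set 'S_m}) (psi : 'S_m -> K) : {set {ffun 'I_m -> 'I_N}} :=
  [set j : {ffun 'I_m -> 'I_N} | [forall s in U, lexle (fun k => nat_of_ord (j k))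
                                 (fun k => nat_of_ord (idx_act s j k))]
        && [forall s in U, (idx_act s j == j) ==> (psi s == 1)]].

Definition gfun m N (U : {set 'S_m}) (psi : 'S_m -> K) : (mpoly.mpoly N K) :=
  \sum_(j in Jset N U psi) \prod_(k < m) 'X_(j k).

Definition psum N (s : nat) : (mpoly.mpoly N K) := \sum_(i < N) 'X_i ^+ s.

Definition ncycles m (s : nat) (sigma : 'S_m) : nat :=
  #|[set c in porbits sigma | #|c| == s]|.

Definition cycle_index m N (U : {set 'S_m}) (psi : 'S_m -> K) : (mpoly.mpoly N K) :=
  (#|U|%:R)^-1 *:
    \sum_(sigma in U) psi sigma *:
       \prod_(1 <= s < m.+1) psum N s ^+ ncycles s sigma.

End GenFun.

(* Main.v *)
Require Import Defs.
From HB Require Import structures.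
From mathcomp Require Import all_boot all_order all_algebra all_fingroup.
From mathcomp Require Import generic_quotient ring_quotient monalg mpoly.
From mathcomp Require finmap.
Import GRing.Theory.
Local Open Scope ring_scope.

Module PartA.
Import finmap.
Import GRing.Theory.
Local Set Implicit Arguments. Local Unset Strict Implicit. Local Unset Printing Implicit Defensive.
Local Open Scope ring_scope.
Local Open Scope quotient_scope.

Section Lin.
Variables (K : fieldType) (U V : lmodType K) (f : U -> V) (Hf : linear f).
Lemma linD x y : f (x + y) = f x + f y.
Proof. by have := Hf 1 x y; rewrite !scale1r. Qed.
Lemma lin0 : f 0 = 0.
Proof. by have := linD 0 0; rewrite addr0 => /eqP; rewrite -subr_eq subrr eq_sym => /eqP. Qed.
Lemma linZ a x : f (a *: x) = a *: f x.
Proof. by have := Hf a x 0; rewrite !addr0 lin0 addr0. Qed.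
Lemma linN x : f (- x) = - f x.
Proof. by rewrite -scaleN1r linZ scaleN1r. Qed.
Lemma linB x y : f (x - y) = f x - f y.
Proof. by rewrite linD linN. Qed.
Lemma lin_sum (I : Type) (s : seq I) (P : pred I) (F : I -> U) :
  f (\sum_(i <- s | P i) F i) = \sum_(i <- s | P i) f (F i).
Proof.
elim: s => [|a s IH]; first by rewrite !big_nil lin0.
by rewrite !big_cons; case: (P a); rewrite ?linD IH.
Qed.
End Lin.

Lemma lin_comp (K : fieldType) (U V W : lmodType K) (f : V -> W) (g : U -> V) :
  linear f -> linear g -> linear (f \o g).
Proof. by move=> Hf Hg a x y /=; rewrite Hg Hf. Qed.

Lemma lin_id (K : fieldType) (U : lmodType K) : linear (@id U).
Proof. by []. Qed.

Section QuotTheory.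
Variables (K : fieldType) (V : lmodType K) (S : V -> Prop).
Local Notation Q := (Quot S).

Lemma piD (x y : V) : \pi_Q (x + y) = \pi_Q x + \pi_Q y.
Proof. exact: raddfD. Qed.
Lemma pi0 : \pi_Q (0 : V) = 0.
Proof. exact: raddf0. Qed.
Lemma piZ c (x : V) : \pi_Q (c *: x) = c *: \pi_Q x.
Proof. by rewrite pi_scale. Qed.
Lemma piB (x y : V) : \pi_Q (x - y) = \pi_Q x - \pi_Q y.
Proof. exact: raddfB. Qed.
Lemma pi_lin : linear (\pi_Q).
Proof. by move=> a x y; rewrite piD piZ. Qed.

Lemma pi_eq0 (x : V) : \pi_Q x = 0 <-> x \in span_pred S.
Proof.
rewrite -pi0; split.
  by move=> /eqP; rewrite -Quotient.idealrBE subr0.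
by move=> h; apply/eqP; rewrite -Quotient.idealrBE subr0.
Qed.

Lemma pi_gen (x : V) : S x -> \pi_Q x = 0.
Proof. by move=> h; apply/pi_eq0; apply: span_gen. Qed.

Lemma pi_eq (x y : V) : x - y \in span_pred S -> \pi_Q x = \pi_Q y.
Proof. by move=> /pi_eq0; rewrite piB => /eqP; rewrite subr_eq0 => /eqP. Qed.

Lemma span_kill (M : lmodType K) (f : V -> M) : linear f ->
  (forall v, S v -> f v = 0) -> forall v, v \in span_pred S -> f v = 0.
Proof.
move=> Hf HS v /span_predP [s [Hs ->]].
rewrite (lin_sum Hf) big1_seq // => p ps.
by rewrite (linZ Hf) HS ?scaler0 //; apply: Hs.
Qed.

Definition qlift (M : lmodType K) (f : V -> M) (q : Q) : M := f (repr q).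

Lemma qliftE (M : lmodType K) (f : V -> M) : linear f ->
  (forall v, S v -> f v = 0) -> forall v, qlift f (\pi_Q v) = f v.
Proof.
move=> Hf HS v; rewrite /qlift.
have: repr (\pi_Q v) - v \in span_pred S.
  by apply/pi_eq0; rewrite piB reprK subrr.
move=> /(span_kill Hf HS); rewrite (linB Hf) => /eqP; rewrite subr_eq0 => /eqP.
done.
Qed.

Lemma qlift_lin (M : lmodType K) (f : V -> M) : linear f ->
  (forall v, S v -> f v = 0) -> linear (qlift f).
Proof.
move=> Hf HS a x y; rewrite -[x]reprK -[y]reprK -(pi_lin a) !(qliftE Hf HS).
by rewrite Hf.
Qed.

Lemma quot_ext (M : lmodType K) (g1 g2 : Q -> M) :
  (forall v, g1 (\pi_Q v) = g2 (\pi_Q v)) -> g1 =1 g2.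
Proof. by move=> h q; rewrite -[q]reprK h. Qed.

End QuotTheory.

Section FreeTheory.
Variables (K : fieldType).
Local Notation Free X := (@malg X K).

Definition flift (X : choiceType) (M : lmodType K) (h : X -> M) (g : Free X) : M :=
  \sum_(k <- monalg.msupp g) monalg.mcoeff k g *: h k.

Lemma fliftEw (X : choiceType) (M : lmodType K) (h : X -> M) (g : Free X)
  (D : {fset X}) : (monalg.msupp g `<=` D)%fset -> flift h g = \sum_(k <- D) monalg.mcoeff k g *: h k.
Proof.
move=> sub; rewrite /flift.
rewrite (big_fset_incl _ sub) //= => k kD kg.
by rewrite mcoeff_outdom // scale0r.
Qed.


Lemma malgU_scale (X : choiceType) (k : X) (c : K) :
  monalg.mkmalgU k c = c *: monalg.mkmalgU k (1 : K).
Proof.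
apply/monalg.malgP => k'; rewrite monalg.mcoeffZ !monalg.mcoeffU.
by case: (k == k'); rewrite ?mulr1 ?mulr0.
Qed.

Lemma flift_lin (X : choiceType) (M : lmodType K) (h : X -> M) : linear (flift h).
Proof.
move=> a x y.
have sx : (monalg.msupp x `<=` monalg.msupp x `|` monalg.msupp y)%fset by apply: fsubsetUl.
have sy : (monalg.msupp y `<=` monalg.msupp x `|` monalg.msupp y)%fset by apply: fsubsetUr.
have sxy : (monalg.msupp (a *: x + y) `<=` monalg.msupp x `|` monalg.msupp y)%fset.
  apply: fsubset_trans (monalg.msuppD_le _ _) _.
  by apply: fsetUSS => //; apply: monalg.msuppZ_le.
rewrite (fliftEw h sx) (fliftEw h sy) (fliftEw h sxy) scaler_sumr -big_split /=.
apply: eq_bigr => k _; rewrite monalg.mcoeffD monalg.mcoeffZ scalerDl scalerA //.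
Qed.

Lemma fliftU (X : choiceType) (M : lmodType K) (h : X -> M) (x : X) :
  flift h (monalg.mkmalgU x (1 : K)) = h x.
Proof.
rewrite /flift monalg.msuppU oner_eq0 big_seq_fset1 monalg.mcoeffUU scale1r //.
Qed.

Lemma free_decomp (X : choiceType) (g : Free X) :
  g = \sum_(k <- monalg.msupp g) monalg.mcoeff k g *: monalg.mkmalgU k (1 : K).
Proof.
rewrite {1}(monalg.monalgE g); apply: eq_bigr => k _; exact: malgU_scale.
Qed.

Lemma free_ext (X : choiceType) (M : lmodType K) (g1 g2 : Free X -> M) :
  linear g1 -> linear g2 ->
  (forall x, g1 (monalg.mkmalgU x (1 : K)) = g2 (monalg.mkmalgU x (1 : K))) ->
  g1 =1 g2.
Proof.
move=> H1 H2 h g; rewrite (free_decomp g) (lin_sum H1) (lin_sum H2).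
by apply: eq_bigr => k _; rewrite (linZ H1) (linZ H2) h.
Qed.

Lemma free_liftE (X Y : choiceType) (f : X -> Y) (g : Free X) :
  free_lift f g = flift (fun x => monalg.mkmalgU (f x) (1 : K)) g.
Proof. by rewrite /free_lift /flift; apply: eq_bigr => k _; rewrite malgU_scale. Qed.

Lemma free_lift_lin (X Y : choiceType) (f : X -> Y) : linear (@free_lift K X Y f).
Proof. by move=> a x y; rewrite !free_liftE flift_lin. Qed.

Lemma free_liftU (X Y : choiceType) (f : X -> Y) (x : X) :
  free_lift f (monalg.mkmalgU x (1 : K)) = monalg.mkmalgU (f x) (1 : K).
Proof. by rewrite free_liftE fliftU. Qed.

End FreeTheory.

End PartA.
Import PartA.

Module PartB.
Import finmap.
Import GRing.Theory.
Local Set Implicit Arguments. Local Unset Strict Implicit. Local Unset Printing Implicit Defensive.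
Local Open Scope ring_scope.
Local Open Scope quotient_scope.

Section Tens.
Variables (K : fieldType).
Local Notation bb x := (monalg.mkmalgU x (1 : K)).

Definition multilin (E M : lmodType K) m (h : {ffun 'I_m -> E} -> M) :=
  forall x i a y z, h (upd x i (a *: y + z)) = a *: h (upd x i y) + h (upd x i z).

Section TP.
Variables (E : lmodType K) (m : nat).

Lemma multilin_kill (M : lmodType K) (G : @malg {ffun 'I_m -> E} K -> M) :
  linear G -> multilin (fun x => G (bb x)) ->
  forall v, multilin_rel v -> G v = 0.
Proof.
move=> HG Hm v [x [i [a [y [z ->]]]]].
rewrite !(linB HG) (linZ HG) Hm. by rewrite -addrA (addrC _ (G (bb (upd x i z)))) addrA addrK subrr.
Qed.

Definition tlift (M : lmodType K) (h : {ffun 'I_m -> E} -> M) (z : tpow E m) : M :=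
  qlift (flift h) z.

Lemma tlift_lin (M : lmodType K) (h : {ffun 'I_m -> E} -> M) :
  multilin h -> linear (tlift h).
Proof.
move=> Hh; apply: qlift_lin; first exact: flift_lin.
apply: multilin_kill; first exact: flift_lin.
by move=> x i a y z; rewrite !fliftU Hh.
Qed.

Lemma tliftE (M : lmodType K) (h : {ffun 'I_m -> E} -> M) :
  multilin h -> forall x, tlift h (tens x) = h x.
Proof.
move=> Hh x; rewrite /tlift /tens (qliftE (flift_lin h)) ?fliftU //.
apply: multilin_kill; first exact: flift_lin.
by move=> x' i a y z; rewrite !fliftU Hh.
Qed.

Lemma tens_multilin : multilin (@tens K E m).
Proof.
move=> x i a y z; rewrite /tens -piZ -piD; apply/eqP; rewrite -subr_eq0 -piB.
apply/eqP/pi_gen; exists x, i, a, y, z; by rewrite opprD addrA.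
Qed.

Lemma tpow_ext (M : lmodType K) (g1 g2 : tpow E m -> M) :
  linear g1 -> linear g2 -> (forall x, g1 (tens x) = g2 (tens x)) -> g1 =1 g2.
Proof.
move=> H1 H2 h; apply: quot_ext => v.
apply: (@free_ext K _ _ (fun v => g1 (\pi v)) (fun v => g2 (\pi v))).
- exact: lin_comp H1 (@pi_lin _ _ _).
- exact: lin_comp H2 (@pi_lin _ _ _).
- exact: h.
Qed.

Lemma tact_kill (s : 'S_m) : forall v, multilin_rel v ->
  \pi_(tpow E m) (free_lift (@perm_tuple E m s) v) = 0.
Proof.
apply: (multilin_kill (G := fun v => \pi_(tpow E m) (free_lift (@perm_tuple E m s) v))).
  exact: lin_comp (@pi_lin _ _ _) (@free_lift_lin _ _ _ _).
move=> x i a y z /=; rewrite !free_liftU.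
have H: forall e, perm_tuple s (upd x i e) = upd (perm_tuple s x) (s i) e.
  move=> e; apply/ffunP => k; rewrite !ffunE.
  have -> : ((s^-1)%g k == i) = (k == s i).
    apply/eqP/eqP => [<-|->]; by rewrite ?permKV ?permK.
  by case: (k == s i).
rewrite !H; exact: tens_multilin.
Qed.

Lemma tact_lin (s : 'S_m) : linear (@tact K E m s).
Proof.
exact: (@qlift_lin _ _ (@multilin_rel K E m) _ _
  (lin_comp (@pi_lin _ _ _) (@free_lift_lin _ _ _ (@perm_tuple E m s))) (@tact_kill s)).
Qed.

Lemma tactE (s : 'S_m) (x : {ffun 'I_m -> E}) : tact s (tens x) = tens (perm_tuple s x).
Proof.
rewrite /tact /tens.
have := (qliftE (S := @multilin_rel K E m) (lin_comp (@pi_lin _ _ _) (@free_lift_lin _ _ _ (@perm_tuple E m s))) (@tact_kill s) (bb x)).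
by rewrite /qlift /= free_liftU.
Qed.

End TP.
End Tens.

End PartB.
Import PartB.

Module PartC.
Import finmap.
Import GRing.Theory.
Local Set Implicit Arguments. Local Unset Strict Implicit. Local Unset Printing Implicit Defensive.
Local Open Scope ring_scope.
Local Open Scope quotient_scope.

Section SSP.
Variables (K : fieldType) (E : lmodType K) (m : nat) (U : {set 'S_m}) (psi : 'S_m -> K).
Local Notation bb x := (monalg.mkmalgU x (1 : K)).
Local Notation SP := (ssp E U psi).

Lemma sspe_multilin : multilin (@sspe K E m U psi).
Proof. by move=> x i a y z; rewrite /sspe tens_multilin piD piZ. Qed.

Lemma ssp_ext (M : lmodType K) (g1 g2 : SP -> M) :
  linear g1 -> linear g2 -> (forall x, g1 (sspe U psi x) = g2 (sspe U psi x)) -> g1 =1 g2.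
Proof.
move=> H1 H2 h; apply: quot_ext => v.
apply: (@tpow_ext K E m _ (fun v => g1 (\pi v)) (fun v => g2 (\pi v))).
- exact: lin_comp H1 (@pi_lin _ _ _).
- exact: lin_comp H2 (@pi_lin _ _ _).
- exact: h.
Qed.

Lemma ssp_pi_tact s (z : tpow E m) : s \in U ->
  \pi_SP (tact s z) = (psi s)^-1 *: \pi_SP z.
Proof.
move=> sU; apply/eqP; rewrite eq_sym -subr_eq0 -piZ -piB; apply/eqP/pi_gen.
by exists s; split => //; exists z.
Qed.

Lemma sspe_perm s (x : {ffun 'I_m -> E}) : s \in U ->
  sspe U psi (perm_tuple s x) = (psi s)^-1 *: sspe U psi x.
Proof. by move=> sU; rewrite /sspe -tactE ssp_pi_tact. Qed.

Definition sslift (M : lmodType K) (h : {ffun 'I_m -> E} -> M) (q : SP) : M :=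
  qlift (tlift h) q.

Section SSLift.
Variables (M : lmodType K) (h : {ffun 'I_m -> E} -> M) (Hh : multilin h)
  (Hp : forall s x, s \in U -> h (perm_tuple s x) = (psi s)^-1 *: h x).

Lemma sslift_kill v : ssp_rel U psi v -> tlift h v = 0.
Proof.
move=> [s [sU [z ->]]].
have Ht := tlift_lin Hh.
rewrite (linB Ht) (linZ Ht).
have ->: tlift h (tact s z) = (psi s)^-1 *: tlift h z.
  apply: (@tpow_ext K E m M (fun z => tlift h (tact s z)) (fun z => (psi s)^-1 *: tlift h z)).
  - exact: lin_comp Ht (@tact_lin _ _ _ _).
  - by move=> a x y; rewrite Ht scalerDr !scalerA mulrC.
  - by move=> x; rewrite tactE !tliftE // Hp.
by rewrite subrr.
Qed.

Lemma sslift_lin : linear (sslift h).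
Proof. exact: qlift_lin (tlift_lin Hh) sslift_kill. Qed.

Lemma ssliftE x : sslift h (sspe U psi x) = h x.
Proof. by rewrite /sslift /sspe (qliftE (tlift_lin Hh) sslift_kill) tliftE. Qed.
End SSLift.
End SSP.

Section TPROD.
Variables (K : fieldType) (A B : lmodType K).
Local Notation bb x := (monalg.mkmalgU x (1 : K)).
Local Notation TP := (tprod A B).

Definition bilin (M : lmodType K) (h : A -> B -> M) :=
  (forall c a a' b, h (c *: a + a') b = c *: h a b + h a' b) /\
  (forall c a b b', h a (c *: b + b') = c *: h a b + h a b').

Lemma tpe_bilin : bilin (@tpe K A B).
Proof.
split=> [c a a' b|c a b b']; rewrite /tpe -piZ -piD; apply/eqP; rewrite -subr_eq0 -piB;
  apply/eqP/pi_gen.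
  by left; exists a, a', b, c; rewrite opprD addrA.
by right; exists a, b, b', c; rewrite opprD addrA.
Qed.

Definition plift (M : lmodType K) (h : A -> B -> M) (q : TP) : M :=
  qlift (flift (fun p : A * B => h p.1 p.2)) q.

Section PLift.
Variables (M : lmodType K) (h : A -> B -> M) (Hh : bilin h).

Lemma plift_kill v : bilin_rel v -> flift (fun p : A * B => h p.1 p.2) v = 0.
Proof.
have Hf := flift_lin (fun p : A * B => h p.1 p.2).
case: Hh => H1 H2.
case=> [[a [a' [b [c ->]]]]|[a [b [b' [c ->]]]]];
  rewrite !(linB Hf) (linZ Hf) !fliftU /= ?H1 ?H2;
  by rewrite -addrA (addrC _ (h _ _)) addrA addrK subrr.
Qed.

Lemma plift_lin : linear (plift h).
Proof. exact: qlift_lin (flift_lin _) plift_kill. Qed.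

Lemma pliftE a b : plift h (tpe a b) = h a b.
Proof. by rewrite /plift /tpe (qliftE (flift_lin _) plift_kill) fliftU. Qed.
End PLift.

Lemma tprod_ext (M : lmodType K) (g1 g2 : TP -> M) :
  linear g1 -> linear g2 -> (forall a b, g1 (tpe a b) = g2 (tpe a b)) -> g1 =1 g2.
Proof.
move=> H1 H2 h; apply: quot_ext => v.
apply: (@free_ext K _ _ (fun v => g1 (\pi v)) (fun v => g2 (\pi v))).
- exact: lin_comp H1 (@pi_lin _ _ _).
- exact: lin_comp H2 (@pi_lin _ _ _).
- by case=> a b; exact: h.
Qed.
End TPROD.

End PartC.
Import PartC.

Module PartD.
Import finmap.
Import GRing.Theory.
Local Set Implicit Arguments. Local Unset Strict Implicit. Local Unset Printing Implicit Defensive.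
Local Open Scope ring_scope.
Local Open Scope quotient_scope.

Section Tuples.
Variables (T : Type) (d r : nat).
Definition tleft (x : {ffun 'I_(d + r) -> T}) : {ffun 'I_d -> T} := [ffun a => x (lshift r a)].
Definition tright (x : {ffun 'I_(d + r) -> T}) : {ffun 'I_r -> T} := [ffun b => x (rshift d b)].

Lemma split_l (a : 'I_d) : split (lshift r a) = inl a.
Proof. exact: (@unsplitK d r (inl a)). Qed.
Lemma split_r (b : 'I_r) : split (rshift d b) = inr b.
Proof. exact: (@unsplitK d r (inr b)). Qed.

Lemma ord_split (k : 'I_(d + r)) :
  (exists a, k = lshift r a) \/ (exists b, k = rshift d b).
Proof.
rewrite -(splitK k); case: (split k) => a; [left|right]; by exists a.
Qed.

Lemma concat_left (y : {ffun 'I_d -> T}) (z : {ffun 'I_r -> T}) : tleft (concat_tuple y z) = y.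
Proof. by apply/ffunP => a; rewrite !ffunE split_l. Qed.
Lemma concat_right (y : {ffun 'I_d -> T}) (z : {ffun 'I_r -> T}) : tright (concat_tuple y z) = z.
Proof. by apply/ffunP => a; rewrite !ffunE split_r. Qed.
Lemma concat_LR (x : {ffun 'I_(d + r) -> T}) : concat_tuple (tleft x) (tright x) = x.
Proof.
apply/ffunP => k; case: (ord_split k) => [[a ->]|[a ->]];
  by rewrite !ffunE ?split_l ?split_r ffunE.
Qed.

Lemma concat_updl (y : {ffun 'I_d -> T}) (z : {ffun 'I_r -> T}) i e :
  concat_tuple (upd y i e) z = upd (concat_tuple y z) (lshift r i) e.
Proof.
apply/ffunP => k; case: (ord_split k) => [[a ->]|[a ->]];
  by rewrite !ffunE ?split_l ?split_r ?ffunE ?eq_lshift ?eq_rlshift.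
Qed.
Lemma concat_updr (y : {ffun 'I_d -> T}) (z : {ffun 'I_r -> T}) i e :
  concat_tuple y (upd z i e) = upd (concat_tuple y z) (rshift d i) e.
Proof.
apply/ffunP => k; case: (ord_split k) => [[a ->]|[a ->]];
  by rewrite !ffunE ?split_l ?split_r ?ffunE ?eq_lrshift ?eq_rshift.
Qed.

Lemma upd_split (x : {ffun 'I_(d + r) -> T}) i e : (exists a, i = lshift r a /\
     upd x i e = concat_tuple (upd (tleft x) a e) (tright x)) \/
  (exists b, i = rshift d b /\
     upd x i e = concat_tuple (tleft x) (upd (tright x) b e)).
Proof.
rewrite -(splitK i); case: (split i) => a /=; [left|right]; exists a; split=> //.
  by rewrite concat_updl concat_LR.
by rewrite concat_updr concat_LR.
Qed.

Lemma upd_l (x : {ffun 'I_(d + r) -> T}) j e :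
  upd x (lshift r j) e = concat_tuple (upd (tleft x) j e) (tright x).
Proof. by rewrite concat_updl concat_LR. Qed.
Lemma upd_r (x : {ffun 'I_(d + r) -> T}) j e :
  upd x (rshift d j) e = concat_tuple (tleft x) (upd (tright x) j e).
Proof. by rewrite concat_updr concat_LR. Qed.

Lemma pair_permE (s : 'S_d) (t : 'S_r) k : pair_perm s t k = pair_fun s t k.
Proof. by rewrite /pair_perm permE. Qed.

Lemma pair_perm_inv (s : 'S_d) (t : 'S_r) : ((pair_perm s t)^-1)%g = pair_perm s^-1 t^-1.
Proof.
have H : (pair_perm s t * pair_perm s^-1 t^-1 = 1)%g.
  by apply/permP => k; rewrite permM !pair_permE pair_funK perm1.
by rewrite -[RHS]mul1g -(mulVg (pair_perm s t)) -mulgA H mulg1.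
Qed.

Lemma perm_concat (s : 'S_d) (t : 'S_r) (y : {ffun 'I_d -> T}) (z : {ffun 'I_r -> T}) :
  perm_tuple (pair_perm s t) (concat_tuple y z) =
  concat_tuple (perm_tuple s y) (perm_tuple t z) :> {ffun 'I_(d + r) -> T}.
Proof.
apply/ffunP => k; rewrite !ffunE pair_perm_inv pair_permE /pair_fun.
case: (ord_split k) => [[a ->]|[a ->]];
  by rewrite ?split_l ?split_r /= ffunE.
Qed.

End Tuples.

End PartD.
Import PartD.

Module PartE.
Import finmap.
Import GRing.Theory.
Local Set Implicit Arguments. Local Unset Strict Implicit. Local Unset Printing Implicit Defensive.
Local Open Scope ring_scope.
Local Open Scope quotient_scope.

Lemma lin_char1 (K : fieldType) m (U : {group 'S_m}) (psi : 'S_m -> K) :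
  lin_char U psi -> psi 1%g = 1.
Proof.
case=> HM Hn; have h1 : (1%g \in U) by apply: group1.
have := HM _ _ h1 h1; rewrite mulg1 => /eqP.
rewrite -subr_eq0 -{1}(mulr1 (psi 1%g)) -mulrBr mulf_eq0 (negbTE (Hn _ h1)) /=.
by rewrite subr_eq0 eq_sym => /eqP.
Qed.

Lemma perm_tuple1 (T : Type) m (x : {ffun 'I_m -> T}) : perm_tuple 1%g x = x.
Proof. by apply/ffunP => k; rewrite ffunE invg1 perm1. Qed.

Lemma lin_combo (K : fieldType) (U V : lmodType K) (f g : U -> V) (c : K) :
  linear f -> linear g -> linear (fun x => c *: f x + g x).
Proof.
move=> Hf Hg a x y; rewrite Hf Hg scalerDr !scalerDr !scalerA mulrC.
by rewrite -!addrA; congr (_ + _); rewrite addrC -!addrA; congr (_ + _); rewrite addrC.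
Qed.

Lemma bilinZl (K : fieldType) (A B M : lmodType K) (h : A -> B -> M) :
  bilin h -> forall c a b, h (c *: a) b = c *: h a b.
Proof. by case=> H1 _ c a b; apply: (linZ (f := fun a => h a b)) => c' x y; apply: H1. Qed.
Lemma bilinZr (K : fieldType) (A B M : lmodType K) (h : A -> B -> M) :
  bilin h -> forall c a b, h a (c *: b) = c *: h a b.
Proof. by case=> _ H2 c a b; apply: (linZ (f := h a)) => c' x y; apply: H2. Qed.

Section Main.
Variables (K : fieldType) (d r : nat) (W : {group 'S_d}) (V : {group 'S_r})
  (chi : 'S_d -> K) (theta : 'S_r -> K) (lam : 'S_(d + r) -> K).
Hypotheses (Hchi : lin_char W chi) (Hth : lin_char V theta)
  (Hlam : forall s t, s \in W -> t \in V -> lam (pair_perm s t) = chi s * theta t).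
Local Notation P := (prod_perm_set W V).

Lemma pair_in s t : s \in W -> t \in V -> pair_perm s t \in P.
Proof. by move=> sW tV; apply/imset2P; exists s t. Qed.

Section OverE.
Variable (E : lmodType K).

Definition betaR (y : {ffun 'I_d -> E}) (b : ssp E V theta) : ssp E P lam :=
  sslift (fun z => sspe P lam (concat_tuple y z)) b.
Definition beta (a : ssp E W chi) (b : ssp E V theta) : ssp E P lam :=
  sslift (fun y => betaR y b) a.
Definition PiM : tprod (ssp E W chi) (ssp E V theta) -> ssp E P lam := plift beta.

Lemma hz_multi y : multilin (fun z : {ffun 'I_r -> E} => sspe P lam (concat_tuple y z)).
Proof. by move=> z i a e e'; rewrite !concat_updr; apply: sspe_multilin. Qed.

Lemma hz_perm y : forall t (z : {ffun 'I_r -> E}), t \in V ->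
  sspe P lam (concat_tuple y (perm_tuple t z)) = (theta t)^-1 *: sspe P lam (concat_tuple y z).
Proof.
move=> t z tV.
have e1 : concat_tuple y (perm_tuple t z) = perm_tuple (pair_perm 1%g t) (concat_tuple y z).
  by rewrite perm_concat perm_tuple1.
rewrite e1 (sspe_perm _ _ (pair_in (group1 W) tV)) (Hlam (group1 W) tV).
by rewrite (lin_char1 Hchi) mul1r.
Qed.

Lemma betaR_lin y : linear (betaR y).
Proof. exact: sslift_lin (hz_multi y) (hz_perm y). Qed.

Lemma betaR_E y z : betaR y (sspe V theta z) = sspe P lam (concat_tuple y z).
Proof. exact: ssliftE (hz_multi y) (hz_perm y) z. Qed.

Lemma hy_multi b : multilin (fun y => betaR y b).
Proof.
move=> y i a e e'; move: b.
apply: (@ssp_ext K E r V theta _ (fun b => betaR (upd y i (a *: e + e')) b)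
   (fun b => a *: betaR (upd y i e) b + betaR (upd y i e') b)).
- exact: betaR_lin.
- exact: lin_combo (betaR_lin _) (betaR_lin _).
- by move=> z; rewrite !betaR_E !concat_updl sspe_multilin.
Qed.

Lemma hy_perm b : forall s (y : {ffun 'I_d -> E}), s \in W ->
  betaR (perm_tuple s y) b = (chi s)^-1 *: betaR y b.
Proof.
move=> s y sW; move: b.
apply: (@ssp_ext K E r V theta _ (fun b => betaR (perm_tuple s y) b)
   (fun b => (chi s)^-1 *: betaR y b)).
- exact: betaR_lin.
- by move=> c x x'; rewrite betaR_lin scalerDr !scalerA mulrC.
- move=> z; rewrite !betaR_E.
  have e1 : concat_tuple (perm_tuple s y) z = perm_tuple (pair_perm s 1%g) (concat_tuple y z).
    by rewrite perm_concat perm_tuple1.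
  rewrite e1 (sspe_perm _ _ (pair_in sW (group1 V))) (Hlam sW (group1 V)).
  by rewrite (lin_char1 Hth) mulr1.
Qed.

Lemma beta_lin1 b : linear (fun a => beta a b).
Proof. exact: sslift_lin (hy_multi b) (hy_perm b). Qed.

Lemma beta_E1 y b : beta (sspe W chi y) b = betaR y b.
Proof. exact: ssliftE (hy_multi b) (hy_perm b) y. Qed.

Lemma beta_E y z : beta (sspe W chi y) (sspe V theta z) = sspe P lam (concat_tuple y z).
Proof. by rewrite beta_E1 betaR_E. Qed.

Lemma beta_lin2 a : linear (beta a).
Proof.
move=> c b b'; move: a.
apply: (@ssp_ext K E d W chi _ (fun a => beta a (c *: b + b'))
   (fun a => c *: beta a b + beta a b')).
- exact: beta_lin1.
- exact: lin_combo (beta_lin1 _) (beta_lin1 _).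
- by move=> y; rewrite !beta_E1 betaR_lin.
Qed.

Lemma beta_bilin : bilin beta.
Proof. by split=> c a a' b; [apply: beta_lin1 | apply: beta_lin2]. Qed.

Lemma PiM_lin : linear PiM.
Proof. exact: plift_lin beta_bilin. Qed.

Lemma PiM_E y z : PiM (tpe (sspe W chi y) (sspe V theta z)) = sspe P lam (concat_tuple y z).
Proof. by rewrite /PiM pliftE ?beta_E //; exact: beta_bilin. Qed.

Lemma PiM_tpe a b : PiM (tpe a b) = beta a b.
Proof. by rewrite /PiM pliftE //; exact: beta_bilin. Qed.

Definition hx (x : {ffun 'I_(d + r) -> E}) : tprod (ssp E W chi) (ssp E V theta) :=
  tpe (sspe W chi (tleft x)) (sspe V theta (tright x)).

Lemma hx_concat y z : hx (concat_tuple y z) = tpe (sspe W chi y) (sspe V theta z).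
Proof. by rewrite /hx concat_left concat_right. Qed.

Lemma hx_multi : multilin hx.
Proof.
move=> x i a e e'; case: (ord_split i) => [[j ->]|[j ->]];
  rewrite ?upd_l ?upd_r !hx_concat.
  by rewrite sspe_multilin; case: (tpe_bilin (ssp E W chi) (ssp E V theta)) => ->.
by rewrite sspe_multilin; case: (tpe_bilin (ssp E W chi) (ssp E V theta)) => _ ->.
Qed.

Lemma hx_perm : forall s x, s \in P -> hx (perm_tuple s x) = (lam s)^-1 *: hx x.
Proof.
move=> s x /imset2P [sg tu sW tV ->].
rewrite -(concat_LR x) perm_concat !hx_concat (sspe_perm _ _ sW) (sspe_perm _ _ tV).
rewrite (bilinZl (tpe_bilin _ _)) (bilinZr (tpe_bilin _ _)) scalerA (Hlam sW tV).
by rewrite invfM mulrC.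
Qed.

Definition PiInv : ssp E P lam -> tprod (ssp E W chi) (ssp E V theta) := sslift hx.

Lemma PiInv_lin : linear PiInv.
Proof. exact: sslift_lin hx_multi hx_perm. Qed.

Lemma PiInv_E x : PiInv (sspe P lam x) = hx x.
Proof. exact: ssliftE hx_multi hx_perm x. Qed.

Lemma PiK : cancel PiM PiInv.
Proof.
apply: (@tprod_ext K _ _ _ (fun u => PiInv (PiM u)) id).
- exact: lin_comp PiInv_lin PiM_lin.
- by [].
move=> a b; rewrite PiM_tpe /=; move: a.
apply: (@ssp_ext K E d W chi _ (fun a => PiInv (beta a b)) (fun a => tpe a b)).
- exact: lin_comp PiInv_lin (beta_lin1 b).
- by move=> c x x'; case: (tpe_bilin (ssp E W chi) (ssp E V theta)) => ->.
move=> y; move: b.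
apply: (@ssp_ext K E r V theta _ (fun b => PiInv (beta (sspe W chi y) b))
   (fun b => tpe (sspe W chi y) b)).
- exact: lin_comp PiInv_lin (beta_lin2 _).
- by move=> c x x'; case: (tpe_bilin (ssp E W chi) (ssp E V theta)) => _ ->.
by move=> z; rewrite beta_E PiInv_E hx_concat.
Qed.

Lemma PiKV : cancel PiInv PiM.
Proof.
apply: (@ssp_ext K E _ P lam _ (fun u => PiM (PiInv u)) id).
- exact: lin_comp PiM_lin PiInv_lin.
- by [].
by move=> x; rewrite PiInv_E /hx PiM_E concat_LR.
Qed.

End OverE.
End Main.

End PartE.
Import PartE.

Module PartF.
Import finmap.
Import GRing.Theory.
Local Set Implicit Arguments. Local Unset Strict Implicit. Local Unset Printing Implicit Defensive.
Local Open Scope ring_scope.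
Local Open Scope quotient_scope.

Section Nat.
Variables (K : fieldType) (E F : lmodType K) (l : E -> F) (Hl : linear l).
Local Notation bb x := (monalg.mkmalgU x (1 : K)).

Section M.
Variable m : nat.
Definition lmap (x : {ffun 'I_m -> E}) : {ffun 'I_m -> F} := [ffun i => l (x i)].

Lemma tpow_map_kill : forall v, multilin_rel v ->
  \pi_(tpow F m) (free_lift lmap v) = 0.
Proof.
apply: (multilin_kill (G := fun v => \pi_(tpow F m) (free_lift lmap v))).
  exact: lin_comp (@pi_lin _ _ _) (@free_lift_lin _ _ _ _).
move=> x i a y z /=; rewrite !free_liftU.
have H: forall e, lmap (upd x i e) = upd (lmap x) i (l e).
  by move=> e; apply/ffunP => k; rewrite !ffunE; case: (k == i).
by rewrite !H Hl; exact: tens_multilin.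
Qed.

Lemma tpow_map_lin : linear (@tpow_map K E F m l).
Proof.
exact: (@qlift_lin _ _ (@multilin_rel K E m) _ _
  (lin_comp (@pi_lin _ _ _) (@free_lift_lin _ _ _ lmap)) tpow_map_kill).
Qed.

Lemma tpow_mapE (x : {ffun 'I_m -> E}) : tpow_map l (tens x) = tens (lmap x).
Proof.
rewrite /tpow_map /tens.
have := (qliftE (S := @multilin_rel K E m) (lin_comp (@pi_lin _ _ _) (@free_lift_lin _ _ _ lmap)) tpow_map_kill (bb x)).
by rewrite /qlift /= free_liftU.
Qed.

Lemma tpow_map_tact (s : 'S_m) (z : tpow E m) : tpow_map l (tact s z) = tact s (tpow_map l z).
Proof.
move: z; apply: (@tpow_ext K E m _ (fun z => tpow_map l (tact s z)) (fun z => tact s (tpow_map l z))).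
- exact: lin_comp tpow_map_lin (@tact_lin _ _ _ _).
- exact: lin_comp (@tact_lin _ _ _ _) tpow_map_lin.
move=> x; rewrite tactE !tpow_mapE tactE; congr tens.
by apply/ffunP => k; rewrite !ffunE.
Qed.

Variables (U : {set 'S_m}) (psi : 'S_m -> K).

Lemma ssp_map_kill : forall v, ssp_rel U psi v ->
  \pi_(ssp F U psi) (tpow_map l v) = 0.
Proof.
move=> v [s [sU [z ->]]].
rewrite (linB tpow_map_lin) (linZ tpow_map_lin) piB piZ tpow_map_tact ssp_pi_tact //.
by rewrite subrr.
Qed.

Lemma ssp_map_lin : linear (@ssp_map K E F m U psi l).
Proof.
exact: (@qlift_lin _ _ (@ssp_rel K E m U psi) _ _
  (lin_comp (@pi_lin _ _ _) tpow_map_lin) ssp_map_kill).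
Qed.

Lemma ssp_mapE (x : {ffun 'I_m -> E}) : ssp_map l (sspe U psi x) = sspe U psi (lmap x).
Proof.
rewrite /ssp_map /sspe.
have := (qliftE (S := @ssp_rel K E m U psi) (lin_comp (@pi_lin _ _ _) tpow_map_lin) ssp_map_kill (tens x)).
by rewrite /qlift /= tpow_mapE.
Qed.
End M.
End Nat.

Section TPMap.
Variables (K : fieldType) (A A' B B' : lmodType K) (f : A -> A') (g : B -> B')
  (Hf : linear f) (Hg : linear g).
Local Notation bb x := (monalg.mkmalgU x (1 : K)).
Local Notation h := (fun p : A * B => (f p.1, g p.2)).

Lemma tprod_map_kill : forall v, bilin_rel v ->
  \pi_(tprod A' B') (free_lift h v) = 0.
Proof.
have HG : linear (fun v : @malg (A * B)%type K => \pi_(tprod A' B') (free_lift h v)).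
  exact: lin_comp (@pi_lin _ _ (@bilin_rel K A' B')) (@free_lift_lin _ _ _ h).
case: (tpe_bilin A' B') => H1 H2.
move=> v; case=> [[a [a' [b [c ->]]]]|[a [b [b' [c ->]]]]];
  rewrite !(linB HG) (linZ HG) /= !free_liftU /= ?Hf ?Hg;
  rewrite -[\pi_(tprod A' B') _]/(tpe _ _) -![\pi_(tprod A' B') _]/(tpe _ _) ?H1 ?H2;
  by rewrite -addrA (addrC _ (tpe _ _)) addrA addrK subrr.
Qed.

Lemma tprod_map_lin : linear (tprod_map f g).
Proof.
exact: (@qlift_lin _ _ (@bilin_rel K A B) _ _
  (lin_comp (@pi_lin _ _ _) (@free_lift_lin _ _ _ h)) tprod_map_kill).
Qed.

Lemma tprod_mapE a b : tprod_map f g (tpe a b) = tpe (f a) (g b).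
Proof.
rewrite /tprod_map /tpe.
have := (qliftE (S := @bilin_rel K A B) (lin_comp (@pi_lin _ _ _) (@free_lift_lin _ _ _ h)) tprod_map_kill (bb (a, b))).
by rewrite /qlift /= free_liftU.
Qed.
End TPMap.

End PartF.
Import PartF.

Module PartG.
Import finmap.
Import GRing.Theory.
Local Set Implicit Arguments. Local Unset Strict Implicit. Local Unset Printing Implicit Defensive.
Local Open Scope ring_scope.
Local Open Scope quotient_scope.

Section Final12.
Variables (K : fieldType) (d r : nat) (W : {group 'S_d}) (V : {group 'S_r})
  (chi : 'S_d -> K) (theta : 'S_r -> K) (lam : 'S_(d + r) -> K).
Hypotheses (Hchi : lin_char W chi) (Hth : lin_char V theta)
  (Hlam : forall s t, s \in W -> t \in V -> lam (pair_perm s t) = chi s * theta t).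

Lemma part12 :
  (exists Pi : forall E : lmodType K,
      tprod (ssp E W chi) (ssp E V theta) -> ssp E (prod_perm_set W V) lam,
    (forall E : lmodType K,
       linear (Pi E) /\ bijective (Pi E) /\
       forall (y : {ffun 'I_d -> E}) (z : {ffun 'I_r -> E}),
         Pi E (tpe (sspe W chi y) (sspe V theta z))
         = sspe (prod_perm_set W V) lam (concat_tuple y z)) /\
    (forall (E F : vectType K) (l : {linear E -> F})
            (u : tprod (ssp E W chi) (ssp E V theta)),
       Pi F (tprod_map (ssp_map l) (ssp_map l) u)
       = ssp_map l (Pi E u))).
Proof.
exists (fun E => @PiM K d r W V chi theta lam E); split.
  move=> E /=; split; first exact: (@PiM_lin _ _ _ _ _ _ _ _ Hchi Hth Hlam E).
  split; first by exists (@PiInv K d r W V chi theta lam E);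
    [exact: (@PiK _ _ _ _ _ _ _ _ Hchi Hth Hlam E) | exact: (@PiKV _ _ _ _ _ _ _ _ Hchi Hth Hlam E)].
  by move=> y z; rewrite (PiM_E Hchi Hth Hlam).
move=> E F l.
have Hl : linear l by move=> a x y; rewrite linearP.
apply: (@tprod_ext K _ _ _
   (fun u => PiM lam (tprod_map (ssp_map l) (ssp_map l) u))
   (fun u => ssp_map l (PiM lam u))).
- have h1 := (ssp_map_lin Hl (U := W) (psi := chi)). have h2 := (ssp_map_lin Hl (U := V) (psi := theta)). have h3 := tprod_map_lin h1 h2. exact: (lin_comp (@PiM_lin _ _ _ _ _ _ _ _ Hchi Hth Hlam F) h3).
- by move=> c x x' /=; rewrite (PiM_lin Hchi Hth Hlam) (ssp_map_lin Hl).
move=> a b; rewrite /= (tprod_mapE (@ssp_map_lin K _ _ _ Hl _ _ _) (@ssp_map_lin K _ _ _ Hl _ _ _)).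
rewrite !(PiM_tpe Hchi Hth Hlam).
move: a; apply: (@ssp_ext K E d W chi _
   (fun a => beta lam (ssp_map l a) (ssp_map l b)) (fun a => ssp_map l (beta lam a b))).
- exact: lin_comp (beta_lin1 Hchi Hth Hlam _) (@ssp_map_lin K _ _ _ Hl _ _ _).
- exact: lin_comp (@ssp_map_lin K _ _ _ Hl _ _ _) (beta_lin1 Hchi Hth Hlam _).
move=> y; move: b; apply: (@ssp_ext K E r V theta _
   (fun b => beta lam (ssp_map l (sspe W chi y)) (ssp_map l b))
   (fun b => ssp_map l (beta lam (sspe W chi y) b))).
- exact: lin_comp (beta_lin2 Hchi Hth Hlam _) (@ssp_map_lin K _ _ _ Hl _ _ _).
- exact: lin_comp (@ssp_map_lin K _ _ _ Hl _ _ _) (beta_lin2 Hchi Hth Hlam _).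
move=> z; rewrite !(@ssp_mapE K _ _ _ Hl _ _ _) !(beta_E Hchi Hth Hlam) (@ssp_mapE K _ _ _ Hl _ _ _).
congr sspe; apply/ffunP => k; rewrite !ffunE.
by case: (ord_split k) => [[j ->]|[j ->]]; rewrite ?split_l ?split_r ffunE.
Qed.
End Final12.

End PartG.
Import PartG.

Module PartH.
Import finmap.
Import GRing.Theory.
Local Set Implicit Arguments. Local Unset Strict Implicit. Local Unset Printing Implicit Defensive.
Local Open Scope ring_scope.

Definition Xm (K : fieldType) m N (j : {ffun 'I_m -> 'I_N}) : mpoly.mpoly N K :=
  \prod_(k < m) 'X_(j k).

Section Cyc.
Variables (K : fieldType) (m N : nat) (s : 'S_m).
Local Notation T := {ffun 'I_m -> 'I_N}.

Lemma fixdP (j : T) : reflect (forall k, j (s k) = j k) (idx_act s j == j).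
Proof.
apply: (iffP eqP) => [h k|h].
  by rewrite -{1}h ffunE permK.
by apply/ffunP => k; rewrite ffunE -{2}(permKV s k) h.
Qed.

Lemma fixd_pow (j : T) : idx_act s j == j -> forall i k, j ((s ^+ i)%g k) = j k.
Proof.
move=> /fixdP h; elim=> [|i IH] k; first by rewrite expg0 perm1.
by rewrite expgSr permM h IH.
Qed.

Lemma fixd_orbit (j : T) : idx_act s j == j -> forall k y, y \in porbit s k -> j y = j k.
Proof. by move=> h k y /porbitP [i ->]; apply: fixd_pow. Qed.

Lemma mem_porbits k : porbit s k \in porbits s.
Proof. by apply: imset_f. Qed.


Lemma card_porbit_pred c : c \in porbits s -> #|[pred k | porbit s k == c]| = #|c|.
Proof.
move=> /imsetP [x _ ->]; apply: eq_card => k /=; by rewrite inE eq_porbit_mem.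
Qed.

Local Notation O := {x in porbits s}.

Lemma ex_in (c : O) : exists y, y \in val c.
Proof. by case: c => c /= /imsetP [x _ ->]; exists x; apply: porbit_id. Qed.

Definition rep (c : O) : 'I_m := xchoose (ex_in c).

Lemma rep_in (c : O) : rep c \in val c.
Proof. exact: xchooseP. Qed.

Lemma porbit_rep (c : O) : porbit s (rep c) = val c.
Proof.
have h := rep_in c; have /imsetP [x _ hx] := valP c.
by rewrite hx in h *; apply/eqP; rewrite eq_porbit_mem.
Qed.

Definition orb_of (k : 'I_m) : O := exist _ (porbit s k) (mem_porbits k).
Definition j_of_f (f : {ffun O -> 'I_N}) : T := [ffun k => f (orb_of k)].
Definition f_of_j (j : T) : {ffun O -> 'I_N} := [ffun c : O => j (rep c)].

Lemma orb_of_repr (c : O) : orb_of (rep c) = c.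
Proof. by apply: val_inj; rewrite /= porbit_rep. Qed.

Lemma f_of_jK f : f_of_j (j_of_f f) = f.
Proof. by apply/ffunP => c; rewrite !ffunE orb_of_repr. Qed.

Lemma j_of_fK_eq (j : T) : (j_of_f (f_of_j j) == j) = (idx_act s j == j).
Proof.
apply/eqP/idP => [h|h].
  apply/fixdP => k; rewrite -h !ffunE /=.
  have e : orb_of (s k) = orb_of k.
    by apply: val_inj => /=; rewrite -(porbit_perm s 1 k) expg1.
  by rewrite e.


apply/ffunP => k; rewrite !ffunE /=.
apply: (fixd_orbit h); exact: (rep_in (orb_of k)).
Qed.

Lemma fixed_sum :
  \sum_(j : T | idx_act s j == j) Xm K j = \prod_(c in porbits s) psum K N #|c|.
Proof.
rewrite [RHS]big_sub /psum [RHS]bigA_distr_bigA /=.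
rewrite (reindex_onto f_of_j j_of_f); last by move=> f _; rewrite f_of_jK.
apply: eq_big => j; first by rewrite j_of_fK_eq.
move=> fj; rewrite /Xm.
rewrite (partition_big (porbit s) (fun c => c \in porbits s)); last by move=> k _; apply: mem_porbits.
rewrite big_sub; apply: eq_bigr => c _; rewrite ffunE.
rewrite (eq_bigr (fun _ => 'X_(j (rep c)))); last first.
  move=> k /eqP hk; congr ('X_ _); symmetry; apply: (fixd_orbit fj); rewrite hk.
  exact: rep_in.
rewrite prodr_const; congr (_ ^+ _).
by rewrite -(card_porbit_pred (valP c)).
Qed.


Lemma prod_porbits :
  \prod_(c in porbits s) psum K N #|c| =
  \prod_(1 <= i < m.+1) psum K N i ^+ ncycles i s.
Proof.
have cle : forall c : {set 'I_m}, (#|c| <= m)%N.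
  by move=> c; rewrite -[X in (_ <= X)%N]card_ord; apply: max_card.
rewrite (partition_big (fun c : {set 'I_m} => (inord #|c| : 'I_m.+1)) xpredT) //=.
transitivity (\prod_(j < m.+1) \prod_(c in porbits s | #|c| == j) psum K N #|c|).
  apply: eq_bigr => j _; apply: eq_bigl => c; congr (_ && _).
  by rewrite -val_eqE /= inordK // ltnS.
rewrite -(big_mkord xpredT (fun j => \prod_(c in porbits s | #|c| == j) psum K N #|c|)).
rewrite big_ltn // [X in X * _]big1 ?mul1r; last first.
  move=> c /andP [/imsetP [x _ ->]].
  by rewrite (negbTE (card_porbit_neq0 _ _)).
apply: eq_big_nat => i /andP [i1 im].
rewrite (eq_bigr (fun _ => psum K N i)); last first.
  by move=> c /andP [_ /eqP ->].
rewrite prodr_const /ncycles; congr (_ ^+ _); apply: eq_card => c.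
by rewrite !inE.
Qed.

Lemma fixed_expand :
  \prod_(1 <= i < m.+1) psum K N i ^+ ncycles i s =
  \sum_(j : T | idx_act s j == j) Xm K j.
Proof. by rewrite fixed_sum prod_porbits. Qed.

End Cyc.

End PartH.
Import PartH.

Module PartI.
Import finmap.
Import GRing.Theory.
Local Set Implicit Arguments. Local Unset Strict Implicit. Local Unset Printing Implicit Defensive.

Section Lex.
Variable m : nat.
Implicit Types f g h : 'I_m -> nat.

Lemma lexleP f g : lexle f g <->
  (forall k, f k = g k) \/
  exists k : 'I_m, (forall i : 'I_m, (i < k)%N -> f i = g i) /\ (f k < g k)%N.
Proof.
split.
  move=> /forallP H.
  case: (pickP (fun k => f k != g k)) => [k0 hk0|heq]; last first.
    by left => k; apply/eqP; move: (heq k) => /= /negbFE.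
  right.
  have [k1 hk1 kmin] : exists2 k1, f k1 != g k1 &
      forall i, f i != g i -> (k1 <= i)%N.
    case: (@arg_minnP _ k0 (fun k => f k != g k) (fun k : 'I_m => nat_of_ord k) hk0).
    by move=> k1 h1 hmin; exists k1.
  exists k1; split.
    move=> i ilt; apply/eqP; apply: contraTT ilt => hi; rewrite -leqNgt.
    exact: kmin.
  have := H k1; rewrite hk1 andbT => /implyP; apply.
  apply/forallP => i; apply/implyP => ilt; apply/eqP.
  by apply/eqP; apply: contraTT ilt => hi; rewrite -leqNgt; apply: kmin.
case=> [heq|[k0 [hpre hlt]]]; apply/forallP => k; apply/implyP => /andP [/forallP hp hne].
  by rewrite heq eqxx in hne.
case: (ltngtP k k0) => [kk0|k0k|kk0].
- by rewrite hpre ?eqxx in hne.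
- by have := hp k0; rewrite k0k /= => /eqP e; rewrite e ltnn in hlt.
- by have -> : k = k0 by apply: val_inj.
Qed.

Lemma lex_refl f : lexle f f.
Proof. by apply/lexleP; left. Qed.

Lemma lex_antisym f g : lexle f g -> lexle g f -> forall k, f k = g k.
Proof.
move=> /lexleP [//|[k1 [p1 l1]]] /lexleP [h|[k2 [p2 l2]]].
  by move: l1; rewrite h ltnn.
case: (ltngtP k1 k2) => [h|h|h].
- by move: l1; rewrite p2 // ltnn.
- by move: l2; rewrite p1 // ltnn.
- have e : k1 = k2 by apply: val_inj.
  by rewrite e in l1; move: (ltn_trans l1 l2); rewrite ltnn.
Qed.

Lemma lex_trans g f h : lexle f g -> lexle g h -> lexle f h.
Proof.
move=> /lexleP [e1|[k1 [p1 l1]]] /lexleP [e2|[k2 [p2 l2]]]; apply/lexleP.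
- by left => k; rewrite e1 e2.
- right; exists k2; split=> [i ilt|]; first by rewrite e1 p2.
  by rewrite e1.
- right; exists k1; split=> [i ilt|]; first by rewrite -e2 p1.
  by rewrite -e2.
right; case: (ltngtP k1 k2) => [h12|h21|e].
- exists k1; split=> [i ilt|]; first by rewrite p1 // p2 // (ltn_trans ilt h12).
  by rewrite -(p2 _ h12).
- exists k2; split=> [i ilt|]; first by rewrite p1 ?(ltn_trans ilt h21) // p2.
  by rewrite (p1 _ h21).
- have e' : k1 = k2 by apply: val_inj.
  exists k1; split=> [i ilt|]; first by rewrite p1 // p2 // -e.
  by rewrite e' in l1 *; apply: ltn_trans l1 l2.
Qed.

Lemma lex_total f g : lexle f g || lexle g f.
Proof.
case: (pickP (fun k => f k != g k)) => [k0 hk0|heq]; last first.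
  by apply/orP; left; apply/lexleP; left => k; apply/eqP; move: (heq k) => /= /negbFE.
have [k1 hk1 kmin] : exists2 k1, f k1 != g k1 & forall i, f i != g i -> (k1 <= i)%N.
  case: (@arg_minnP _ k0 (fun k => f k != g k) (fun k : 'I_m => nat_of_ord k) hk0).
  by move=> k1 h1 hmin; exists k1.
have pre : forall i : 'I_m, (i < k1)%N -> f i = g i.
  move=> i ilt; apply/eqP; apply: contraTT ilt => hi; rewrite -leqNgt; exact: kmin.
apply/orP; case: (ltngtP (f k1) (g k1)) => [l|l|e].
- by left; apply/lexleP; right; exists k1.
- by right; apply/lexleP; right; exists k1; split=> // i ilt; rewrite pre.
- by rewrite e eqxx in hk1.
Qed.

End Lex.

Lemma seq_min (T : eqType) (R : rel T) :
  (forall x y, R x y || R y x) -> (forall y x z, R x y -> R y z -> R x z) ->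
  forall (s : seq T) x0, x0 \in s -> exists2 x, x \in s & all (R x) s.
Proof.
move=> tot tr; elim=> [//|a s IH] x0 _.
case: s IH => [|b s] IH.
  exists a; first exact: mem_head.
  by rewrite /= andbT; case/orP: (tot a a).
have [x xs hx] := IH b (mem_head _ _).
case/orP: (tot a x) => h.
- exists a; first exact: mem_head.
  have raa : R a a by case/orP: (tot a a).
  apply/allP => y; rewrite inE => /orP [/eqP -> //|ys].
  apply: tr h _; exact: (allP hx).
- exists x; first by rewrite inE xs orbT.
  apply/allP => y; rewrite inE => /orP [/eqP -> //|ys]; exact: (allP hx).
Qed.

End PartI.
Import PartI.

Module PartJ.
Import finmap.
Import GRing.Theory.
Local Set Implicit Arguments. Local Unset Strict Implicit. Local Unset Printing Implicit Defensive.
Local Open Scope ring_scope.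

Section Act.
Variables (m N : nat).
Local Notation T := {ffun 'I_m -> 'I_N}.
Definition iact (j : T) (s : 'S_m) : T := idx_act s j.
Lemma iact1 : iact^~ 1%g =1 id.
Proof. by move=> j; apply/ffunP => k; rewrite ffunE invg1 perm1. Qed.
Lemma iactM : forall x, act_morph iact x.
Proof. by move=> j a b; apply/ffunP => k; rewrite !ffunE invMg permM. Qed.
Definition idxA := TotalAction iact1 iactM.
End Act.

Section Burn.
Variables (K : fieldType) (Hc : [pchar K] =i pred0) (m N : nat) (U : {group 'S_m})
  (psi : 'S_m -> K) (Hpsi : lin_char U psi).
Local Notation T := {ffun 'I_m -> 'I_N}.
Local Notation A := (@idxA m N).
Local Notation lexj j j' := (lexle (fun k => nat_of_ord (j k)) (fun k => nat_of_ord (j' k))).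
Definition lexmin (j : T) := [forall s in U, lexj j (idx_act s j)].
Definition triv (j : T) := [forall s in U, (idx_act s j == j) ==> (psi s == 1)].

Lemma actE (j : T) s : A j s = idx_act s j.
Proof. by []. Qed.

Lemma stabE (j : T) s : (s \in ('C_U[j | A])%g) = (s \in U) && (idx_act s j == j).
Proof. by rewrite in_setI; congr andb; apply/astab1P/eqP. Qed.

Lemma natf_neq0 n : (0 < n)%N -> (n%:R : K) != 0.
Proof. by move=> n0; rewrite ((pcharf0P K).1 Hc) -lt0n. Qed.

Lemma Xm_act (j : T) s : Xm K (idx_act s j) = Xm K j.
Proof.
rewrite /Xm (reindex_inj (@perm_inj _ s)) /=; apply: eq_bigr => k _.
by rewrite ffunE permK.
Qed.

Lemma psi1 : psi 1%g = 1.
Proof.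
case: Hpsi => HM Hn; have h1 : (1%g \in U) by apply: group1.
have := HM _ _ h1 h1; rewrite mulg1 => /eqP.
rewrite -subr_eq0 -{1}(mulr1 (psi 1%g)) -mulrBr mulf_eq0 (negbTE (Hn _ h1)) /=.
by rewrite subr_eq0 eq_sym => /eqP.
Qed.

Lemma psiV s : s \in U -> psi s^-1 * psi s = 1.
Proof. by move=> sU; rewrite -Hpsi.1 ?groupV // mulVg psi1. Qed.

Lemma triv_act (j : T) s : s \in U -> triv j -> triv (idx_act s j).
Proof.
move=> sU /forall_inP tj; apply/forall_inP => t tU; apply/implyP => /eqP ht.
have hfix : idx_act (s * t * s^-1)%g j == j.
  rewrite -!actE !actM !actE ht.
  by rewrite -actE -actM mulgV act1.
have hU : (s * t * s^-1)%g \in U by rewrite !groupM ?groupV.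
have := implyP (tj _ hU) hfix => /eqP.
rewrite !Hpsi.1 ?groupM ?groupV //.
rewrite mulrC mulrA psiV // mul1r => ->; exact: eqxx.
Qed.

Lemma triv_actE (j : T) s : s \in U -> triv (idx_act s j) = triv j.
Proof.
move=> sU; apply/idP/idP; last exact: triv_act.
move=> h; have sV : (s^-1)%g \in U by rewrite groupV.
have := triv_act sV h.
by rewrite -!actE -actM mulgV act1.
Qed.

Lemma sum_stab (j : T) :
  \sum_(s in U | idx_act s j == j) psi s = (triv j)%:R * #|('C_U[j | A])%g|%:R.
Proof.
rewrite (eq_bigl (fun s => s \in ('C_U[j | A])%g)); last by move=> s; rewrite stabE.
case tj: (triv j); rewrite ?mul1r ?mul0r.
  rewrite (eq_bigr (fun _ => 1)) ?sumr_const //.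
  move=> s; rewrite stabE => /andP [sU fs].
  by move/forall_inP: tj => /(_ s sU) /implyP /(_ fs) /eqP.
move/negbT: tj => /forall_inPn [t tU]; rewrite negb_imply => /andP [ft pt].
have tH : t \in ('C_U[j | A])%g by rewrite stabE tU.
set S := \sum_(s in _) _.
have : S = psi t * S.
  rewrite {1}/S (reindex_inj (mulgI t)) /= /S.
  rewrite (eq_bigl (fun s => s \in ('C_U[j | A])%g)); last by move=> s; rewrite groupMl.
  rewrite mulr_sumr; apply: eq_bigr => s; rewrite stabE => /andP [sU _].
  by rewrite Hpsi.1.
move/eqP; rewrite -subr_eq0 -{1}(mul1r S) -mulrBl mulf_eq0 subr_eq0 eq_sym (negbTE pt) /=.
by move/eqP.
Qed.

Lemma lexmin_uniq (j1 j2 : T) : lexmin j1 -> lexmin j2 -> j2 \in orbit A U j1 -> j1 = j2.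
Proof.
move=> /forall_inP l1 /forall_inP l2 /imsetP [s sU e2]; subst j2.
rewrite actE in l2 *.
have h1 := l1 _ sU.
have sV : (s^-1)%g \in U by rewrite groupV.
have h2 := l2 _ sV.
have e : idx_act s^-1 (idx_act s j1) = j1.
  by rewrite -[idx_act s j1]actE -actE -actM mulgV act1.
rewrite e in h2.
apply/ffunP => k; apply: val_inj; exact: (lex_antisym h1 h2).
Qed.

Lemma lexmin_exists (j : T) : exists2 x, x \in orbit A U j & lexmin x.
Proof.
have tot : forall x y : T, lexj x y || lexj y x by move=> x y; apply: lex_total.
have tr : forall y x z : T, lexj x y -> lexj y z -> lexj x z.
  by move=> y x z; apply: lex_trans.
have jin : j \in enum (orbit A U j) by rewrite mem_enum orbit_refl.
have [x xs hx] := @seq_min T (fun a b => lexj a b) tot tr (enum (orbit A U j)) j jin.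
rewrite mem_enum in xs; exists x => //.
apply/forall_inP => s sU; apply: (allP hx); rewrite mem_enum.
rewrite -actE; apply: orbit_trans (mem_orbit _ _ sU) xs.
Qed.

Definition Gl (j : T) : mpoly.mpoly N K := (lexmin j && triv j)%:R *: Xm K j.

Lemma orbit_sumG (j : T) : \sum_(j' in orbit A U j) Gl j' = (triv j)%:R *: Xm K j.
Proof.
have [x xo lx] := lexmin_exists j.
rewrite (bigD1 x) //= big1 ?addr0; last first.
  move=> j' /andP [j'o nx]; rewrite /Gl.
  case lj: (lexmin j'); last by rewrite scale0r.
  have : x = j'.
    apply: lexmin_uniq => //.
    by rewrite (orbit_transl _ j'o) -orbit_sym.
  by move=> e; rewrite e eqxx in nx.
move: xo lx => /imsetP [s sU ->] lx.
by rewrite /Gl lx /= /iact triv_actE // Xm_act.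
Qed.

Lemma orbit_double (G : T -> mpoly.mpoly N K) :
  \sum_(j : T) (#|orbit A U j|%:R)^-1 *: \sum_(j' in orbit A U j) G j' = \sum_j G j.
Proof.
under eq_bigr do rewrite scaler_sumr big_mkcond /=.
rewrite exchange_big /=; apply: eq_bigr => j' _.
rewrite -big_mkcond /=.
rewrite (eq_bigl (fun j => j \in orbit A U j')); last by move=> j; rewrite orbit_sym.
rewrite (eq_bigr (fun _ => (#|orbit A U j'|%:R)^-1 *: G j')); last first.
  by move=> j jo; move/orbit_eqP: jo => ->.
rewrite sumr_const -scaler_nat scalerA mulfV ?scale1r //.
by apply: natf_neq0; rewrite card_gt0; apply/set0Pn; exists j'; apply: orbit_refl.
Qed.

Lemma burnside :
  (#|U|%:R)^-1 *: \sum_(s in U) psi s *: \sum_(j : T | idx_act s j == j) Xm K j =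
  \sum_(j in Jset N U psi) Xm K j.
Proof.
under eq_bigr do rewrite scaler_sumr.
rewrite (exchange_big_dep xpredT) //=.
under eq_bigr do rewrite -scaler_suml sum_stab.
rewrite scaler_sumr.
transitivity (\sum_(j : T) (#|orbit A U j|%:R)^-1 *: \sum_(j' in orbit A U j) Gl j').
  apply: eq_bigr => j _; rewrite orbit_sumG !scalerA; congr (_ *: _).
  have hc := card_orbit_stab A U j.
  have s0 : (0 < #|('C_U[j | A])%g|)%N.
    by rewrite card_gt0; apply/set0Pn; exists 1%g; rewrite stabE group1 -actE act1 eqxx.
  have o0 : (0 < #|orbit A U j|)%N.
    by rewrite card_gt0; apply/set0Pn; exists j; apply: orbit_refl.
  rewrite -hc natrM invfM -mulrA; congr (_ * _).
  by rewrite mulrCA mulVf ?mulr1 // natf_neq0.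
rewrite orbit_double /Gl (big_mkcond (fun j => j \in Jset N U psi)) /=.
apply: eq_bigr => j _; rewrite inE.
by case: (_ && _); rewrite ?scale1r ?scale0r.
Qed.

End Burn.

End PartJ.
Import PartJ.

Module PartL.
Import finmap.
Import GRing.Theory.
Local Set Implicit Arguments. Local Unset Strict Implicit. Local Unset Printing Implicit Defensive.
Local Open Scope ring_scope.

Lemma gfun_cycle (K : fieldType) (Hc : [pchar K] =i pred0) m N (U : {group 'S_m})
  (psi : 'S_m -> K) (Hpsi : lin_char U psi) :
  gfun N U psi = cycle_index N U psi.
Proof.
rewrite /cycle_index.
under eq_bigr do rewrite fixed_expand.
by rewrite (burnside Hc N Hpsi).
Qed.

Section Concat.
Variables (d r N : nat).
Local Notation lexj j j' := (lexle (fun k => nat_of_ord (j k)) (fun k => nat_of_ord (j' k))).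
Implicit Types (a : {ffun 'I_d -> 'I_N}) (b : {ffun 'I_r -> 'I_N}).

Lemma concat_l a b i : concat_tuple a b (lshift r i) = a i.
Proof. by rewrite ffunE split_l. Qed.
Lemma concat_r a b i : concat_tuple a b (rshift d i) = b i.
Proof. by rewrite ffunE split_r. Qed.

Lemma lex_concat a a' b b' : lexj a a' -> (a = a' -> lexj b b') ->
  lexj (concat_tuple a b) (concat_tuple a' b').
Proof.
move=> /lexleP [ea|[k [pk lk]]] hb; apply/lexleP.
  have ea' : a = a' by apply/ffunP => i; apply: val_inj; apply: ea.
  move: (hb ea') => /lexleP [eb|[k [pk lk]]].
    by left => i; case: (ord_split i) => [[j ->]|[j ->]] /=; rewrite ?concat_l ?concat_r ?ea ?eb.
  right; exists (rshift d k); split; last by rewrite !concat_r.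
  move=> i; case: (ord_split i) => [[j ->]|[j ->]] /=; first by rewrite !concat_l ea.
  by rewrite ltn_add2l !concat_r => /pk.
right; exists (lshift r k); split; last by rewrite !concat_l.
move=> i; case: (ord_split i) => [[j ->]|[j ->]] /=; first by rewrite !concat_l => /pk.
by move=> h; have := ltn_ord k; rewrite ltnNge (leq_trans _ (ltnW h)) // leq_addr.
Qed.

Lemma lex_concat_l a a' b : lexj (concat_tuple a b) (concat_tuple a' b) -> lexj a a'.
Proof.
move=> /lexleP [e|[k [pk lk]]]; apply/lexleP.
  by left => i; have := e (lshift r i); rewrite !concat_l.
case: (ord_split k) pk lk => [[j ->]|[j ->]] pk lk.
  right; exists j; split; last by rewrite !concat_l in lk.
  by move=> i ilt; have := pk (lshift r i) ilt; rewrite !concat_l.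
by rewrite !concat_r ltnn in lk.
Qed.

Lemma lex_concat_r a b b' : lexj (concat_tuple a b) (concat_tuple a b') -> lexj b b'.
Proof.
move=> /lexleP [e|[k [pk lk]]]; apply/lexleP.
  by left => i; have := e (rshift d i); rewrite !concat_r.
case: (ord_split k) pk lk => [[j ->]|[j ->]] pk lk.
  by rewrite !concat_l ltnn in lk.
right; exists j; split; last by rewrite !concat_r in lk.
move=> i ilt; have := pk (rshift d i); rewrite /= ltn_add2l !concat_r; exact.
Qed.
End Concat.

Section Prod.
Variables (K : fieldType) (d r N : nat) (W : {group 'S_d}) (V : {group 'S_r})
  (chi : 'S_d -> K) (theta : 'S_r -> K) (lam : 'S_(d + r) -> K).
Hypotheses (Hchi : lin_char W chi) (Hth : lin_char V theta)
  (Hlam : forall s t, s \in W -> t \in V -> lam (pair_perm s t) = chi s * theta t).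
Local Notation P := (prod_perm_set W V).
Implicit Types (a : {ffun 'I_d -> 'I_N}) (b : {ffun 'I_r -> 'I_N}).

Lemma idx1 m (j : {ffun 'I_m -> 'I_N}) : idx_act 1%g j = j.
Proof. exact: (@iact1 m N j). Qed.

Lemma idx_pair s t a b :
  idx_act (pair_perm s t) (concat_tuple a b) = concat_tuple (idx_act s a) (idx_act t b).
Proof. exact: perm_concat. Qed.

Lemma concat_inj a a' b b' : concat_tuple a b = concat_tuple a' b' -> a = a' /\ b = b'.
Proof.
move=> e; split; first by rewrite -(concat_left a b) e concat_left.
by rewrite -(concat_right a b) e concat_right.
Qed.

Lemma pairP_in s t : s \in W -> t \in V -> pair_perm s t \in P.
Proof. by move=> sW tV; apply/imset2P; exists s t. Qed.

Lemma chi1 : chi 1%g = 1.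
Proof.
case: Hchi => HM Hn; have h1 : (1%g \in W) by apply: group1.
have := HM _ _ h1 h1; rewrite mulg1 => /eqP.
rewrite -subr_eq0 -{1}(mulr1 (chi 1%g)) -mulrBr mulf_eq0 (negbTE (Hn _ h1)) /=.
by rewrite subr_eq0 eq_sym => /eqP.
Qed.
Lemma theta1 : theta 1%g = 1.
Proof.
case: Hth => HM Hn; have h1 : (1%g \in V) by apply: group1.
have := HM _ _ h1 h1; rewrite mulg1 => /eqP.
rewrite -subr_eq0 -{1}(mulr1 (theta 1%g)) -mulrBr mulf_eq0 (negbTE (Hn _ h1)) /=.
by rewrite subr_eq0 eq_sym => /eqP.
Qed.

Lemma Jset_concat a b :
  (concat_tuple a b \in Jset N P lam) = (a \in Jset N W chi) && (b \in Jset N V theta).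
Proof.
rewrite !inE.
have w1 : (1%g \in W) by apply: group1.
have v1 : (1%g \in V) by apply: group1.
have lexiff : [forall s in P, lexle (fun k => nat_of_ord (concat_tuple a b k))
        (fun k => nat_of_ord (idx_act s (concat_tuple a b) k))] =
    [forall s in W, lexle (fun k => nat_of_ord (a k)) (fun k => nat_of_ord (idx_act s a k))] &&
    [forall t in V, lexle (fun k => nat_of_ord (b k)) (fun k => nat_of_ord (idx_act t b k))].
  apply/forall_inP/andP => [h|[/forall_inP hW /forall_inP hV]].
    split; apply/forall_inP => s sU.
      have := h _ (pairP_in sU v1); rewrite idx_pair idx1; exact: lex_concat_l.
    have := h _ (pairP_in w1 sU); rewrite idx_pair idx1; exact: lex_concat_r.
  move=> s /imset2P [sg tu sW tV ->]; rewrite idx_pair.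
  by apply: (@lex_concat d r N a (idx_act sg a) b (idx_act tu b) (hW _ sW)) => _; exact: hV.
have trivif : [forall s in P, (idx_act s (concat_tuple a b) == concat_tuple a b) ==> (lam s == 1)] =
    [forall s in W, (idx_act s a == a) ==> (chi s == 1)] &&
    [forall t in V, (idx_act t b == b) ==> (theta t == 1)].
  apply/forall_inP/andP => [h|[/forall_inP hW /forall_inP hV]].
    split; apply/forall_inP => s sU; apply/implyP => /eqP fx.
      have := implyP (h _ (pairP_in sU v1)); rewrite idx_pair idx1 fx eqxx => /(_ isT).
      by rewrite Hlam // theta1 mulr1.
    have := implyP (h _ (pairP_in w1 sU)); rewrite idx_pair idx1 fx eqxx => /(_ isT).
    by rewrite Hlam // chi1 mul1r.
  move=> s /imset2P [sg tu sW tV ->]; apply/implyP; rewrite idx_pair => /eqP e.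
  have [ea eb] := concat_inj e.
  have := implyP (hW _ sW); rewrite ea eqxx => /(_ isT) /eqP c1.
  have := implyP (hV _ tV); rewrite eb eqxx => /(_ isT) /eqP t1.
  by rewrite Hlam // c1 t1 mulr1.
rewrite lexiff trivif.
by case: [forall s in W, _]; case: [forall s in W, _]; case: [forall s in V, _]; case: [forall s in V, _].
Qed.

Lemma gfun_prod : gfun N P lam = gfun N W chi * gfun N V theta.
Proof.
rewrite /gfun [RHS]big_distrl /=.
under [RHS]eq_bigr do rewrite big_distrr /=.
rewrite [RHS]pair_big_dep /=.
rewrite (reindex (fun p : {ffun 'I_d -> 'I_N} * {ffun 'I_r -> 'I_N} => concat_tuple p.1 p.2)) /=; last first.
  exists (fun j => (tleft j, tright j)) => [[a b] _|j _] /=.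
    by rewrite concat_left concat_right.
  exact: concat_LR.
apply: eq_big => [[a b]|[a b] _] /=; first by rewrite Jset_concat.
rewrite big_split_ord /=; congr (_ * _); apply: eq_bigr => i _.
  by rewrite concat_l.
by rewrite concat_r.
Qed.
End Prod.

End PartL.
Import PartL.


Theorem proposition2p2p1 (K : fieldType) (d r : nat)
    (W : {group 'S_d}) (V : {group 'S_r})
    (chi : 'S_d -> K) (theta : 'S_r -> K) (lam : 'S_(d + r) -> K) :
  [pchar K] =i pred0 ->
  lin_char W chi -> lin_char V theta ->
  (* lam = chi (x) theta on W x V <= S_(d+r) *)
  (forall s t, s \in W -> t \in V -> lam (pair_perm s t) = chi s * theta t) ->
  (exists Pi : forall E : lmodType K,
      tprod (ssp E W chi) (ssp E V theta) -> ssp E (prod_perm_set W V) lam,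
    (* (i) *)
    (forall E : lmodType K,
       linear (Pi E) /\ bijective (Pi E) /\
       forall (y : {ffun 'I_d -> E}) (z : {ffun 'I_r -> E}),
         Pi E (tpe (sspe W chi y) (sspe V theta z))
         = sspe (prod_perm_set W V) lam (concat_tuple y z)) /\
    (* (ii) naturality on finite-dimensional spaces *)
    (forall (E F : vectType K) (l : {linear E -> F})
            (u : tprod (ssp E W chi) (ssp E V theta)),
       Pi F (tprod_map (ssp_map l) (ssp_map l) u)
       = ssp_map l (Pi E u))) /\
  (* (iii) *)
  (forall N : nat,
     gfun N (prod_perm_set W V) lam = cycle_index N W chi * cycle_index N V theta).
Proof.
move=> Hc Hchi Hth Hlam; split; first exact: (part12 Hchi Hth Hlam).
move=> N; rewrite (@gfun_prod K d r N W V chi theta lam Hchi Hth Hlam).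
by rewrite (@gfun_cycle K Hc d N W chi Hchi) (@gfun_cycle K Hc r N V theta Hth).
Qed.
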